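(* There is an absolute constant $A \geq 1$ such that the following holds. Let $L = \{(ay+b,y,\tfrac{1}{2}by+c) : y \in \mathbb{R}\}$ with $a,b,c \in \mathbb{R}$ be a horizontal line, and define $i_{L}(x,y,t) := (ay+b,y,\tfrac{1}{2}by+c)$. Then $$d((x,y,t),i_{L}(x,y,t)) \leq A(1+|a|)\operatorname{dist}((x,y,t),L), \qquad (x,y,t) \in \mathbb{H}.$$
   Context: $\mathbb{H}$ is $\mathbb{R}^{3}$ with group law $(x_{1},y_{1},t_{1}) \cdot (x_{2},y_{2},t_{2}) = (x_{1}+x_{2},y_{1}+y_{2},t_{1}+t_{2}+\tfrac{1}{2}(x_{1}y_{2}-x_{2}y_{1}))$ and metric $d(p,q) = \|q^{-1}\cdot p\|$ with $\|(x,y,t)\| = \max\{\sqrt{x^{2}+y^{2}},\sqrt{|t|}\}$; $\operatorname{dist}$ is w.r.t. $d$. *)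

(* Defs.v *)
From Stdlib Require Import Reals.
From Coquelicot Require Import Coquelicot.
Open Scope R_scope.

Definition H := (R * R * R)%type.

Definition hx (p : H) : R := fst (fst p).
Definition hy (p : H) : R := snd (fst p).
Definition ht (p : H) : R := snd p.

Definition hmul (p q : H) : H :=
  (hx p + hx q, hy p + hy q,
   ht p + ht q + / 2 * (hx p * hy q - hx q * hy p)).

Definition hinv (p : H) : H := (- hx p, - hy p, - ht p).

Definition hnorm (p : H) : R :=
  Rmax (sqrt (hx p ^ 2 + hy p ^ 2)) (sqrt (Rabs (ht p))).

Definition hdist (p q : H) : R := hnorm (hmul (hinv q) p).

Definition line_pt (a b c y : R) : H := (a * y + b, y, / 2 * b * y + c).

Definition hline (a b c : R) (q : H) : Prop := exists y : R, q = line_pt a b c y.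

Definition hdist_set (p : H) (S : H -> Prop) : R :=
  real (Glb_Rbar (fun r => exists q, S q /\ r = hdist p q)).

Definition iL (a b c : R) (p : H) : H := line_pt a b c (hy p).

(* Main.v *)
Require Import Defs.
From Stdlib Require Import Reals Lra Psatz.
From Coquelicot Require Import Coquelicot.
Open Scope R_scope.

Lemma sqrt_le_M (z M : R) : 0 <= M -> z <= M * M -> sqrt z <= M.
Proof.
  intros HM Hz. rewrite <- (sqrt_square M) by exact HM.
  apply sqrt_le_1_alt. exact Hz.
Qed.

Lemma key (a X Y T u v w : R) :
  X = u - a * v -> Y = 0 -> T = w + v * X / 2 ->
  Rmax (sqrt (X ^ 2 + Y ^ 2)) (sqrt (Rabs T)) <=
  2 * (1 + Rabs a) * Rmax (sqrt (u ^ 2 + v ^ 2)) (sqrt (Rabs w)).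
Proof.
  intros HX HY HT.
  set (D := Rmax (sqrt (u ^ 2 + v ^ 2)) (sqrt (Rabs w))).
  assert (HD1 : sqrt (u ^ 2 + v ^ 2) <= D) by apply Rmax_l.
  assert (HD2 : sqrt (Rabs w) <= D) by apply Rmax_r.
  assert (D0 : 0 <= D) by (eapply Rle_trans; [apply sqrt_pos|exact HD2]).
  assert (Hu : Rabs u <= D).
  { eapply Rle_trans; [|exact HD1]. rewrite <- sqrt_Rsqr_abs.
    apply sqrt_le_1_alt. unfold Rsqr. nra. }
  assert (Hv : Rabs v <= D).
  { eapply Rle_trans; [|exact HD1]. rewrite <- sqrt_Rsqr_abs.
    apply sqrt_le_1_alt. unfold Rsqr. nra. }
  assert (Hw : Rabs w <= D * D).
  { rewrite <- (sqrt_sqrt (Rabs w)) by apply Rabs_pos.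
    pose proof (sqrt_pos (Rabs w)). nra. }
  assert (Ha := Rabs_pos a).
  assert (Hav : Rabs (a * v) <= Rabs a * D).
  { rewrite Rabs_mult. apply Rmult_le_compat_l; lra. }
  assert (HXb : Rabs X <= (1 + Rabs a) * D).
  { rewrite HX. eapply Rle_trans; [apply Rabs_triang|]. rewrite Rabs_Ropp. lra. }
  assert (HTb : Rabs T <= D * D + D * ((1 + Rabs a) * D) / 2).
  { rewrite HT. eapply Rle_trans; [apply Rabs_triang|].
    unfold Rdiv. rewrite !Rabs_mult. rewrite Rabs_inv, (Rabs_right 2) by lra.
    assert (Rabs v * Rabs X <= D * ((1 + Rabs a) * D)).
    { apply Rmult_le_compat; try apply Rabs_pos; lra. }
    lra. }
  assert (HX0 := Rabs_pos X).
  apply Rmax_lub; apply sqrt_le_M; try nra.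
  - rewrite HY. replace (X ^ 2 + 0 ^ 2) with (Rabs X * Rabs X)
      by (rewrite <- Rabs_mult; rewrite Rabs_right; [ring|nra]).
    nra.
Qed.

Lemma core (a b c : R) (p : H) (s : R) :
  hdist p (iL a b c p) <= 2 * (1 + Rabs a) * hdist p (line_pt a b c s).
Proof.
  destruct p as [[x y] t].
  unfold hdist, hnorm, hmul, hinv, iL, line_pt, hx, hy, ht; simpl.
  eapply key. all: try ring. all: field. Qed.

Theorem lemma4p12 :
  exists A : R, 1 <= A /\
    forall (a b c : R) (p : H),
      hdist p (iL a b c p) <= A * (1 + Rabs a) * hdist_set p (hline a b c).
Proof.
  exists 2. split; [lra|]. intros a b c p.
  unfold hdist_set.
  set (E := fun r => exists q, hline a b c q /\ r = hdist p q).
  destruct (Glb_Rbar_correct E) as [Hlb Hglb].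
  assert (Ha := Rabs_pos a).
  set (K := hdist p (iL a b c p) / (2 * (1 + Rabs a))).
  assert (HK : is_lb_Rbar E K).
  { intros r [q [[s Hq] Hr]]. subst r q. simpl. unfold K.
    apply Rmult_le_reg_r with (2 * (1 + Rabs a)); [lra|].
    unfold Rdiv. rewrite Rmult_assoc, Rinv_l by lra.
    pose proof (core a b c p s). lra. }
  specialize (Hglb K HK).
  assert (HE : E (hdist p (line_pt a b c 0))).
  { exists (line_pt a b c 0). split; [exists 0; reflexivity|reflexivity]. }
  specialize (Hlb _ HE).
  destruct (Glb_Rbar E) as [r| |]; simpl in *; try contradiction.
  unfold K in Hglb.
  apply Rmult_le_reg_r with (/ (2 * (1 + Rabs a))).
  - apply Rinv_0_lt_compat; lra.
  - replace (2 * (1 + Rabs a) * r * / (2 * (1 + Rabs a))) with r by (field; lra).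
    exact Hglb.
Qed.
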